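(* There is a function $C(t,\epsilon)$ such that the following holds for every positive integer $t$ and every $\epsilon\in(0,1)$: let $G$ be a connected balanced bipartite graph with parts $X,Y$ each of order $n$, with $\delta(G)\geq 3C(t,\epsilon)$ and with no induced $S_{t,t}$. Then \[\Delta_X,\ \Delta_Y\geq \left(1-\frac{C(t,\epsilon)}{\delta(G)}\right)(1-10\epsilon)\,n.\]
   Context: For positive integers $a,b$, the biclaw $S_{a,b}$ is the graph with vertex set $\{x,x_1,\dots,x_a,y,y_1,\dots,y_b\}$ and edges $xy$, $xy_1,\dots,xy_b$, $yx_1,\dots,yx_a$; ''no induced $S_{t,t}$'' means no induced subgraph isomorphic to $S_{t,t}$. For a bipartite graph with parts $X,Y$, $\Delta_X=\max_{x\in X} d(x)$ and $\Delta_Y=\max_{y\in Y} d(y)$. $\delta(G)$ is the minimum degree. *)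

(* Defs.v *)
From HB Require Import structures.
From mathcomp Require Import all_boot all_order all_algebra.
From mathcomp Require Import reals.
Set Implicit Arguments. Unset Strict Implicit. Unset Printing Implicit Defensive.

(* A simple graph on a finType T is a symmetric irreflexive relation e. *)

Definition deg (T : finType) (e : rel T) (v : T) : nat := #|[set u | e v u]|.

(* minimum degree delta(G); the identity #|T| is only used when T is empty *)
Definition mindeg (T : finType) (e : rel T) : nat :=
  \big[minn/#|T|]_(v : T) deg e v.

Definition maxdeg_in (T : finType) (e : rel T) (A : {set T}) : nat :=
  \max_(v in A) deg e v.

(* vertices of the biclaw S_{a,b}:
   inl None = x, inl (Some i) = x_i, inr None = y, inr (Some j) = y_j *)
Definition biclaw_vertex (a b : nat) : finType :=
  (option 'I_a + option 'I_b)%type.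

Definition biclaw_adj0 (a b : nat) (u v : biclaw_vertex a b) : bool :=
  match u, v with
  | inl None, inr _ => true
  | inl (Some _), inr None => true
  | _, _ => false
  end.

(* symmetric closure: edges xy, x y_j, y x_i *)
Definition biclaw_adj (a b : nat) (u v : biclaw_vertex a b) : bool :=
  biclaw_adj0 u v || biclaw_adj0 v u.

Definition has_induced_biclaw (T : finType) (e : rel T) (a b : nat) : Prop :=
  exists f : biclaw_vertex a b -> T,
    injective f /\ forall u v, e (f u) (f v) = biclaw_adj u v.

(* Main.v *)
Require Import Defs.
From HB Require Import structures.
From mathcomp Require Import all_boot all_order all_algebra.
From mathcomp Require Import reals.
From mathcomp Require Import ring lra zify.
Import Order.TTheory GRing.Theory Num.Theory.

Set Implicit Arguments. Unset Strict Implicit. Unset Printing Implicit Defensive.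

Section DC.
Variable (T : finType).
Lemma card_sum (R : {set T}) (p : pred T) :
  #|[set b in R | p b]| = \sum_(b in R) (p b : nat).
Proof.
rewrite -sum1_card (eq_bigl (fun b => (b \in R) && p b)); last by move=> b; rewrite inE.
by rewrite big_mkcondr /=; apply: eq_bigr => b _; case: (p b).
Qed.
Lemma dcount (r : rel T) (S R : {set T}) :
  \sum_(a in S) #|[set b in R | r a b]| = \sum_(b in R) #|[set a in S | r a b]|.
Proof.
under eq_bigr do rewrite card_sum.
rewrite exchange_big /=; apply: eq_bigr => b _; by rewrite card_sum.
Qed.
Lemma cardU_le (A B : {set T}) : #|A :|: B| <= #|A| + #|B|.
Proof. by rewrite -cardsUI leq_addr. Qed.
End DC.

Lemma arith1 {m K nu qu na nt q r c} : 6 <= m -> m * na < qu -> nt < K -> qu <= q + na + nt + 1 -> q <= qu -> m * r < q -> q <= c + r -> nu <= qu + 1 -> (m-2) * nu <= m * (c + K + 2).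
Proof. move=> *. nia. Qed.
Lemma arith2 {m K t qu na nt q} : 6 <= m -> 2 * m * t <= K -> m * na < qu -> nt < K -> qu <= q + na + nt + 1 -> 120 * m * (K+2) <= qu + 1 -> 2 * m * t <= q.
Proof. move=> *. nia. Qed.



Lemma ar_s1 {n D a d m K Y ss} : 6 <= m -> 120 * m * (K+2) <= d -> d <= ss -> (ss = a \/ ss = D) -> a <= n -> D <= n ->
  Y * ((m-2) * ss) <= a * (m+D) + Y * (m * (K+2)) -> m * d * Y <= 2 * n * d + 2 * m * n.
Proof.
move=> h6 hd hs hsa ha hD hY.
have [k hk] : exists k, m = k + 6 by exists (m - 6); lia.
subst m; have e0 : k + 6 - 2 = k + 4 by lia.
rewrite e0 in hY.
have e1 : (k+6) * (K+2) <= ss by lia.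
have e1' : Y * ((k+6) * (K+2)) <= Y * ss by apply: leq_mul.
have e3 : a * D <= ss * n.
  case: hsa => ->; [by apply: leq_mul | by rewrite mulnC; apply: leq_mul].
have e4 : a * k <= n * k by apply: leq_mul.
have e5 : Y * ss * (k+3) <= n * (k+6) + ss * n by lia.
have e6 : (k+6) * (Y * ss) <= 2 * (n * (k+6)) + 2 * (ss * n) by lia.
have e7 : (k+6) * (Y * ss) * d <= (2 * (n * (k+6)) + 2 * (ss * n)) * d by apply: leq_mul.
have e8 : n * (k+6) * d <= n * (k+6) * ss by apply: leq_mul.
have hs0 : 0 < ss by lia.
rewrite -(leq_pmul2r hs0).
lia.
Qed.

Lemma ar_final {n D d m K Y Z1 Z2 D1} : 6 <= m -> 0 < K -> 120 * m * (K+2) <= d ->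
  m * d * Y <= 2 * n * d + 2 * m * n -> Z2 * (d-K) <= K * (2 * n) -> D1 * (d-K) <= K * (2 * n) -> 3 * Z1 <= 4 * D1 ->
  n - D <= Y + Z1 + Z2 -> m * d * (n-D) <= 2 * n * d + m * n * (40 * m * (K+2)).
Proof.
move=> h6 hK hd hY hZ2 hD1 hZ1 hn.
have hdK : 2 * K <= d.
  apply: leq_trans hd; have : K <= m * K by apply: leq_pmull; lia.
  rewrite mulnDr; lia.
have [d' hd'] : exists d', d = d' + K by exists (d - K); lia.
subst d; rewrite addnK in hZ2 hD1.
have g1 : Z2 * K <= Z2 * d' by apply: leq_mul => //; lia.
have f2 : (d'+K) * Z2 <= 4 * n * K by lia.
have g2 : D1 * K <= D1 * d' by apply: leq_mul => //; lia.
have f3 : (d'+K) * D1 <= 4 * n * K by lia.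
have g3 : 3 * Z1 * (d'+K) <= 4 * D1 * (d'+K) by apply: leq_mul.
have f4 : (d'+K) * Z1 <= 6 * n * K by lia.
have f5 : m * (d'+K) * (n-D) <= m * (d'+K) * (Y+Z1+Z2) by apply: leq_mul.
have f6 : m * ((d'+K) * Z1) <= m * (6 * n * K) by apply: leq_mul.
have f7 : m * ((d'+K) * Z2) <= m * (4 * n * K) by apply: leq_mul.
have f8 : m * n * K <= m * (m * n * K) by apply: leq_pmull; lia.
have f9 : m * n <= m * (m * n) by apply: leq_pmull; lia.
lia.
Qed.

Section Graph.
Variables (T : finType) (e : rel T) (X : {set T}).
Hypotheses (esym : symmetric e) (eirr : irreflexive e)
  (ebip : forall u v, e u v -> (u \in X) != (v \in X)).
Variables (t m : nat).
Hypotheses (ht : 0 < t) (hm : 0 < m).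
Hypothesis nobc : ~ has_induced_biclaw e t t.

Definition N v := [set u | e v u].
Definition K := t * (2 * m) ^ t.

Lemma inN u v : (u \in N v) = e v u. Proof. by rewrite inE. Qed.

Lemma same_side u v : (u \in X) = (v \in X) -> e u v = false.
Proof. by move=> h; apply/negP => /ebip; rewrite h eqxx. Qed.

Lemma side_edge u v : e u v -> (v \in X) = ~~ (u \in X).
Proof. by move/ebip; case: (u \in X); case: (v \in X). Qed.

Lemma biclaw_build x y (Pt Qt : {set T}) :
  e x y -> Pt \subset N y :\ x -> Qt \subset N x :\ y ->
  t <= #|Pt| -> t <= #|Qt| ->
  (forall p q, p \in Pt -> q \in Qt -> ~~ e p q) -> False.
Proof.
move=> exy sP sQ hP hQ hPQ; apply: nobc.
pose xs (i : 'I_t) := @enum_val T (pred_of_set Pt) (widen_ord hP i).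
pose ys (i : 'I_t) := @enum_val T (pred_of_set Qt) (widen_ord hQ i).
have xsP i : xs i \in Pt by exact: enum_valP.
have ysP i : ys i \in Qt by exact: enum_valP.
have xsinj : injective xs.
  by move=> i j /enum_val_inj /(congr1 val) /= /val_inj.
have ysinj : injective ys.
  by move=> i j /enum_val_inj /(congr1 val) /= /val_inj.
have xsN i : (xs i != x) && e y (xs i).
  by move: (subsetP sP _ (xsP i)); rewrite !inE.
have ysN i : (ys i != y) && e x (ys i).
  by move: (subsetP sQ _ (ysP i)); rewrite !inE.
have sy : (y \in X) = ~~ (x \in X) by apply: side_edge.
have sxs i : (xs i \in X) = (x \in X).
  by case/andP: (xsN i) => _ /side_edge ->; rewrite sy negbK.
have sys i : (ys i \in X) = ~~ (x \in X).
  by case/andP: (ysN i) => _ /side_edge ->.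
pose f (u : biclaw_vertex t t) : T :=
  match u with
  | inl None => x | inl (Some i) => xs i
  | inr None => y | inr (Some j) => ys j end.
have sf u : (f u \in X) = (if u is inl _ then x \in X else ~~ (x \in X)).
  by case: u => [[i|]|[j|]] /=; rewrite ?sxs ?sys ?sy.
exists f; split.
  move=> u v huv; have := congr1 (fun w => w \in X) huv; rewrite !sf.
  case: u huv => [[i|]|[j|]]; case: v => [[i'|]|[j'|]] //= huv;
    try (by case: (x \in X)).
  all: try (by move=> _; rewrite (xsinj _ _ huv)).
  all: try (by move=> _; rewrite (ysinj _ _ huv)).
  all: try (by move=> _; case/andP: (xsN i) => /eqP; rewrite huv).
  all: try (by move=> _; case/andP: (xsN i') => /eqP; rewrite huv).
  all: try (by move=> _; case/andP: (ysN j) => /eqP; rewrite huv).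
  all: try (by move=> _; case/andP: (ysN j') => /eqP; rewrite huv).
move=> u v.
case: u => [[i|]|[j|]]; case: v => [[i'|]|[j'|]];
  rewrite /biclaw_adj /=.
all: try (by apply: same_side; rewrite ?sxs ?sys ?sy).
all: try (by apply/negbTE/hPQ).
all: try (by rewrite esym; apply/negbTE/hPQ).
all: try (by case/andP: (xsN i)).
all: try (by case/andP: (xsN i')).
all: try (by case/andP: (ysN j)).
all: try (by case/andP: (ysN j')).
all: try (by rewrite esym; case/andP: (xsN i)).
all: try (by rewrite esym; case/andP: (xsN i')).
all: try (by rewrite esym; case/andP: (ysN j)).
all: try (by rewrite esym; case/andP: (ysN j')).
all: try (by rewrite esym).
all: by [].
Qed.

Lemma keyL x y (P Q : {set T}) :
  e x y -> P \subset N y :\ x -> Q \subset N x :\ y -> 2 * m * t <= #|Q| ->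
  #|[set p in P | #|Q| <= m * #|Q :\: N p|]| < K.
Proof.
move=> exy sP sQ hQ; rewrite ltnNge; apply/negP => hK.
set Bad := [set p in P | #|Q| <= m * #|Q :\: N p|].
have step : forall j, j <= t -> exists Pj Qj : {set T},
   [/\ Pj \subset Bad, Qj \subset Q, #|Qj| = j, t * (2 * m) ^ (t - j) <= #|Pj|
     & forall p q, p \in Pj -> q \in Qj -> ~~ e p q].
  elim => [_|j IH hj].
    exists Bad, set0; split; rewrite ?sub0set ?cards0 ?subn0 //.
    by move=> p q _; rewrite in_set0.
  have [Pj [Qj [h1 h2 h3 h4 h5]]] := IH (ltnW hj).
  set r := t * (2 * m) ^ (t - j.+1).
  have hrj : t * (2 * m) ^ (t - j) = 2 * m * r.
    by rewrite /r -(subnSK hj) expnS mulnCA.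
  have [q hq hr] : exists2 q, q \in Q :\: Qj & r <= #|[set p in Pj | ~~ e p q]|.
    case: (boolP [exists q in Q :\: Qj, r <= #|[set p in Pj | ~~ e p q]|]) =>
      [/exists_inP //|/exists_inP hne]; exfalso.
    set S := Q :\: Qj.
    have hlt q : q \in S -> #|[set p in Pj | ~~ e p q]| <= r.-1.
      move=> qS; rewrite -ltnS prednK; last by rewrite /r muln_gt0 ht expn_gt0 muln_gt0 hm.
      by rewrite ltnNge; apply/negP => hh; apply: hne; exists q.
    have e1 : \sum_(q in S) #|[set p in Pj | ~~ e p q]| <= #|S| * r.-1.
      by rewrite -sum_nat_const; apply: leq_sum => q /hlt.
    have e2 := dcount (fun q p => ~~ e p q) S Pj.
    have e3 p : p \in Pj -> #|Q| <= 2 * m * #|[set q in S | ~~ e p q]|.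
      move=> pP; have := subsetP h1 _ pP; rewrite inE => /andP[_ hb].
      have hc : #|Q :\: N p| <= #|[set q in S | ~~ e p q]| + #|Qj|.
        apply: leq_trans (cardU_le _ _); apply: subset_leq_card; apply/subsetP => q.
        rewrite !inE => /andP[hq1 hq2]; case: (boolP (q \in Qj)) => //= qQ.
        by rewrite hq1 hq2.
      rewrite h3 in hc; have hj' : j < t := hj.
      have : m * #|Q :\: N p| <= m * (#|[set q in S | ~~ e p q]| + j) by rewrite leq_mul2l hc orbT.
      nia.
    have e4 : #|Pj| * #|Q| <= 2 * m * \sum_(p in Pj) #|[set q in S | ~~ e p q]|.
      rewrite big_distrr /= -sum_nat_const; apply: leq_sum => p /e3 //.
    have hS : #|S| <= #|Q| by apply: subset_leq_card; apply: subsetDl.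
    have hr0 : 0 < r by rewrite /r muln_gt0 ht expn_gt0 muln_gt0 hm.
    have hQ0 : 0 < #|Q| by apply: leq_trans hQ; rewrite !muln_gt0 hm ht.
    rewrite hrj in h4; rewrite -e2 in e4.
    have e5 : 2 * m * \sum_(q in S) #|[set p in Pj | ~~ e p q]| <= 2 * m * (#|Q| * r.-1).
      rewrite leq_mul2l; apply/orP; right; apply: leq_trans e1 _; by rewrite leq_mul2r hS orbT.
    have e6 : 2 * m * r * #|Q| <= #|Pj| * #|Q| by rewrite leq_mul2r h4 orbT.
    have := leq_trans e6 (leq_trans e4 e5).
    rewrite -(prednK hr0) /=; nia.
  exists [set p in Pj | ~~ e p q], (q |: Qj); split => //.
  - by apply: subset_trans h1; apply/subsetP => p; rewrite inE => /andP[].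
  - by rewrite subUset sub1set h2 andbT; move: hq; rewrite inE => /andP[].
  - by rewrite cardsU1 h3; move: hq; rewrite inE => /andP[->].
  - move=> p q'; rewrite inE => /andP[hp hpq]; rewrite in_setU1 => /orP[/eqP->//|].
    by apply: h5.
have [Pt [Qt [h1 h2 h3 h4 h5]]] := step t (leqnn t).
apply: (biclaw_build exy _ _ _ _ h5).
- apply: subset_trans h1 _; apply: subset_trans sP; apply/subsetP => p.
  by rewrite inE => /andP[].
- exact: subset_trans h2 sQ.
- by move: h4; rewrite subnn expn0 muln1.
- by rewrite h3.
Qed.

Definition NS (U : {set T}) := [set v | [exists u in U, e v u]].

Lemma inNS (U : {set T}) v : (v \in NS U) = [exists u in U, e v u]. Proof. by rewrite inE. Qed.

Lemma NS_intro {U : {set T}} {v u} : u \in U -> e v u -> v \in NS U.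
Proof. by move=> uU evu; rewrite inNS; apply/exists_inP; exists u. Qed.

Lemma Ladj x y (P Q : {set T}) :
  e x y -> P \subset N y :\ x -> Q \subset N x :\ y -> 2 * m * t <= #|Q| ->
  #|P :\: NS Q| < K.
Proof.
move=> exy sP sQ hQ; apply: leq_ltn_trans (keyL exy sP sQ hQ).
apply: subset_leq_card; apply/subsetP => p; rewrite !inE => /andP[hp pP].
rewrite pP /=.
have -> : Q :\: N p = Q.
  apply/setP => q; rewrite !inE; case: (boolP (q \in Q)) => qQ; rewrite ?andbF //=.
  case: (boolP (e p q)) => // epq; exfalso; move/negP: hp; apply.
  by apply/exists_inP; exists q.
by rewrite leq_pmull.
Qed.

Lemma mindeg_le v : mindeg e <= #|N v|.
Proof.
rewrite /mindeg; have : v \in index_enum T by rewrite mem_index_enum.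
elim: (index_enum T) => // a r IH; rewrite inE big_cons => /orP[/eqP <-|/IH h].
  exact: geq_minl.
by rewrite geq_min h orbT.
Qed.

Definition typ u w := [set a in N w :\ u | m * #|(N u :\ w) :\: N a| < #|N u :\ w|].

Lemma typ_sub u w : typ u w \subset N w :\ u.
Proof. by apply/subsetP => a; rewrite inE => /andP[]. Qed.

Lemma typ_big u w : e u w -> 2 * m * t <= #|N u :\ w| -> #|(N w :\ u) :\: typ u w| < K.
Proof.
move=> euw hs; apply: leq_ltn_trans (keyL euw (subxx _) (subxx _) hs).
apply: subset_leq_card; apply/subsetP => a; rewrite !inE => /andP[/nandP hn /andP[au wa]].
rewrite au wa /=; case: hn; first by rewrite au wa.
by rewrite -leqNgt.
Qed.

Lemma K_ge : 2 * m * t <= K.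
Proof.
have h : 2 * m <= (2 * m) ^ t by rewrite -{1}(expn1 (2 * m)) leq_pexp2l // muln_gt0 hm.
by rewrite /K [2 * m * t]mulnC leq_mul2l h orbT.
Qed.

Lemma Kpos : 0 < K.
Proof. by rewrite /K muln_gt0 ht expn_gt0 muln_gt0 hm. Qed.

Lemma szN u w : e u w -> #|N u| = #|N u :\ w| + 1.
Proof. by move=> euw; rewrite (cardsD1 w (N u)) inN euw addnC. Qed.

Section Anchor.
Variables x0 y0 : T.
Hypotheses (hx0 : x0 \in X) (exy0 : e x0 y0)
  (hmax : forall x, x \in X -> #|N x| <= #|N x0|).
Hypotheses (hm6 : 6 <= m) (hd : 120 * m * (K + 2) <= mindeg e).

Definition TA := typ x0 y0.
Definition TB := typ y0 x0.
Definition Typ := TA :|: TB.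
Definition cc v := #|N v :&: Typ|.
Definition ss := minn #|N y0| #|N x0|.
Definition H := [set v | (m - 2) * ss <= m * (cc v + K + 2)].
Definition Tt := [set v | 0 < cc v].

Lemma big_nu u w : e u w -> 2 * m * t <= #|N u :\ w|.
Proof.
move=> euw; have := mindeg_le u; rewrite (szN euw) => h.
have := K_ge; nia.
Qed.

Lemma F1gen u w a v : e u w -> typ w u \subset Typ -> a \in typ u w -> e v a ->
  #|(N v :\ a) :\: [set p | (m - 2) * #|N u| <= m * (cc p + K + 2)]| < K.
Proof.
move=> euw sTyp ha eva.
have ewu : e w u by rewrite esym.
have eav : e a v by rewrite esym.
set Q := (N a :&: typ w u) :\ v.
have sQ : Q \subset N a :\ v.
  by apply/subsetP => b; rewrite !inE => /andP[-> /andP[-> _]].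
have hqu := szN euw.
have hna : m * #|(N u :\ w) :\: N a| < #|N u :\ w| by move: ha; rewrite inE => /andP[_].
have hnt := typ_big ewu (big_nu ewu).
have hcov : #|N u :\ w| <= #|Q| + #|(N u :\ w) :\: N a| + #|(N u :\ w) :\: typ w u| + 1.
  rewrite -(cards1 v); apply: leq_trans (leq_add (leq_add (cardU_le _ _) (leqnn _)) (leqnn _)).
  apply: leq_trans (leq_add (cardU_le _ _) (leqnn _)).
  apply: leq_trans (cardU_le _ _); apply: subset_leq_card; apply/subsetP => b hb.
  rewrite !inE; move: hb; rewrite !inE => /andP[bw bu].
  rewrite bw bu /=.
  by case: (b == v); case: (e a b); case: (_ < _).
have hqq : #|Q| <= #|N u :\ w|.
  apply: subset_leq_card; apply: subset_trans (typ_sub w u).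
  by apply/subsetP => b; rewrite !inE => /andP[_ /andP[_]].
have hQ : 2 * m * t <= #|Q|.
  apply: (arith2 hm6 K_ge hna hnt hcov).
  by apply: leq_trans hd _; rewrite -hqu; apply: mindeg_le.
apply: leq_ltn_trans (keyL eav (subxx _) sQ hQ).
apply: subset_leq_card; apply/subsetP => p; rewrite !inE => /andP[hp /andP[pa vp]].
rewrite pa vp /= leqNgt; apply/negP => hr; move/negP: hp; apply.
apply: (arith1 hm6 hna hnt hcov hqq hr); last by rewrite hqu.
rewrite -(cardsID (N p) Q) leq_add2r /cc; apply: subset_leq_card.
apply/subsetP => b; rewrite !in_setI => /andP[bQ pb]; rewrite pb /=.
apply: (subsetP sTyp); by move: bQ; rewrite /Q in_setD1 in_setI => /andP[_ /andP[_]].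
Qed.

Lemma dmin v : mindeg e <= #|N v|. Proof. exact: mindeg_le. Qed.

Lemma ss_ge : mindeg e <= ss.
Proof. by rewrite /ss leq_min !dmin. Qed.

Lemma H_sub_T : H \subset Tt.
Proof.
apply/subsetP => v; rewrite !inE; case: (posnP (cc v)) => [->|//] /= h.
have := ss_ge; have := Kpos; nia.
Qed.

Lemma F1aux u w a v : e u w -> typ w u \subset Typ -> a \in typ u w -> e v a ->
  ss <= #|N u| -> #|N v :\: H| <= K.
Proof.
move=> euw sT ha eva hs.
have := F1gen euw sT ha eva => h.
have : #|N v :\: H| <= #|(N v :\ a) :\: [set p | (m - 2) * #|N u| <= m * (cc p + K + 2)]| + #|[set a]|.
  apply: leq_trans _ (cardU_le _ _); apply: subset_leq_card; apply/subsetP => b.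
  rewrite !inE => /andP[bH vb]; rewrite vb /= andbT.
  case: (boolP (b == a)) => ba; rewrite ?orbT // orbF andbT.
  apply/negP => hb; move/negP: bH; apply.
  by apply: leq_trans hb; rewrite leq_mul2l hs orbT.
by rewrite cards1 addn1; move=> h2; apply: leq_trans h2 h.
Qed.

Lemma F1 v : v \in Tt -> #|N v :\: H| <= K.
Proof.
rewrite inE /cc card_gt0 => /set0Pn[a]; rewrite in_setI inN => /andP[eva].
rewrite in_setU => /orP[ha|ha].
  apply: (F1aux exy0 _ ha eva); first by apply: subsetUr.
  by rewrite /ss geq_minr.
apply: (F1aux (u := y0) (w := x0) _ _ ha eva); first by rewrite esym.
  by apply: subsetUl.
by rewrite /ss geq_minl.
Qed.

Lemma F2 z h : e z h -> h \in H -> #|N z :\: Tt| < K.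
Proof.
move=> ezh hH.
have ehz : e h z by rewrite esym.
set Q := (N h :&: Typ) :\ z.
have sQ : Q \subset N h :\ z by apply/subsetP => b; rewrite !inE => /andP[-> /andP[-> _]].
have hQ : 2 * m * t <= #|Q|.
  have h1 : cc h <= #|Q| + 1.
    rewrite /cc /Q (cardsD1 z (N h :&: Typ)) addnC leq_add2l; by case: (z \in _).
  move: hH; rewrite inE => h2; have := ss_ge; have := K_ge; nia.
apply: leq_ltn_trans (Ladj ehz (subxx _) sQ hQ).
apply: subset_leq_card; apply/subsetP => p; rewrite !inE => /andP[pT zp].
rewrite zp andbT; apply/andP; split; last first.
  apply/eqP => ph; move: pT; rewrite ph; move: (subsetP H_sub_T _ hH); rewrite inE => ->.
  done.
apply/negP => /exists_inP[q]; rewrite !inE => /andP[qz /andP[hq qT]] epq.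
move/negP: pT; apply; rewrite /cc card_gt0; apply/set0Pn; exists q.
by rewrite !inE epq.
Qed.

Definition M (U : {set T}) := [set z | #|N z :\: U| <= K].

Lemma M_mono (U U' : {set T}) : U \subset U' -> M U \subset M U'.
Proof.
move=> sU; apply/subsetP => z; rewrite !inE => h; apply: leq_trans h.
apply: subset_leq_card; apply: setDS sU.
Qed.

Lemma Fstep (U : {set T}) p z : e p z -> z \in M U -> #|N p :\: NS U| < K.
Proof.
move=> epz zM; have ezp : e z p by rewrite esym.
set Q := (N z :&: U) :\ p.
have sQ : Q \subset N z :\ p by apply/subsetP => b; rewrite !inE => /andP[-> /andP[-> _]].
have hzU : mindeg e <= #|N z :&: U| + K.
  move: zM; rewrite inE => h; have := dmin z; rewrite -(cardsID U (N z)); lia.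
have hQ : 2 * m * t <= #|Q|.
  have h1 : #|N z :&: U| <= #|Q| + 1.
    rewrite /Q (cardsD1 p (N z :&: U)) addnC leq_add2l; by case: (p \in _).
  have := K_ge; nia.
have zNS : z \in NS U.
  have : 0 < #|N z :&: U| by have := K_ge; nia.
  rewrite card_gt0 => /set0Pn[u]; rewrite !inE => /andP[ezu uU].
  by apply/exists_inP; exists u.
apply: leq_ltn_trans (Ladj ezp (subxx _) sQ hQ).
apply: subset_leq_card; apply/subsetP => b; rewrite !inE => /andP[bU pb].
rewrite pb andbT; apply/andP; split; last first.
  by apply/eqP => bz; move: bU; rewrite bz -inNS zNS.
apply/negP => /exists_inP[q]; rewrite !inE => /andP[qp /andP[zq qU]] ebq.
by move/negP: bU; apply; apply/exists_inP; exists q.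
Qed.

Lemma Fstep' (U : {set T}) p z : e p z -> z \in M U -> p \in M (NS U).
Proof. by move=> epz zM; rewrite inE; apply: ltnW; apply: Fstep epz zM. Qed.

Lemma base v : v \in NS Tt -> #|N v :\: M Tt| <= K.
Proof.
rewrite inNS => /exists_inP[tau tT evt].
have etv : e tau v by rewrite esym.
have hF := F1 tT.
set Q := (N tau :&: H) :\ v.
have sQ : Q \subset N tau :\ v by apply/subsetP => b; rewrite !inE => /andP[-> /andP[-> _]].
have hQ : 2 * m * t <= #|Q|.
  have h1 : #|N tau :&: H| <= #|Q| + 1.
    rewrite /Q (cardsD1 v (N tau :&: H)) addnC leq_add2l; by case: (v \in _).
  have := dmin tau; rewrite -(cardsID H (N tau)); have := K_ge; nia.
have tM : tau \in M Tt.
  rewrite inE; apply: leq_trans hF; apply: subset_leq_card; apply: setDS H_sub_T.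
apply: ltnW; apply: leq_ltn_trans (Ladj etv (subxx _) sQ hQ).
apply: subset_leq_card; apply/subsetP => b; rewrite !inE => /andP[bM vb].
rewrite vb andbT; apply/andP; split; last first.
  by apply/eqP => bt; move: bM; rewrite bt; move: tM; rewrite inE => ->.
apply/negP => /exists_inP[q]; rewrite !inE => /andP[qv /andP[tq qH]] ebq.
have qH' : q \in H by rewrite inE.
move/negP: bM; apply; apply: ltnW; exact: F2 ebq qH'.
Qed.

Lemma mostly_adj u v (S : {set T}) : e u v -> #|N u :\: S| <= K ->
  #|(N v :\ u) :\: NS S| < K.
Proof.
move=> euv hS.
set Q := (N u :&: S) :\ v.
have sQ : Q \subset N u :\ v by apply/subsetP => b; rewrite !inE => /andP[-> /andP[-> _]].
have hQ : 2 * m * t <= #|Q|.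
  have h1 : #|N u :&: S| <= #|Q| + 1.
    rewrite /Q (cardsD1 v (N u :&: S)) addnC leq_add2l; by case: (v \in _).
  have := dmin u; rewrite -(cardsID S (N u)); have := K_ge; nia.
apply: leq_ltn_trans (Ladj euv (subxx _) sQ hQ).
apply: subset_leq_card; apply: setDS; apply/subsetP => b; rewrite !inE.
move=> /exists_inP[q]; rewrite !inE => /andP[_ /andP[_ qS]] ebq.
by apply/exists_inP; exists q.
Qed.

Lemma M_NS (U : {set T}) z : z \in M U -> z \in NS U.
Proof.
rewrite inE => h; have := dmin z; rewrite -(cardsID U (N z)) => h2.
have : 0 < #|N z :&: U| by have := K_ge; nia.
rewrite card_gt0 => /set0Pn[u]; rewrite !inE => /andP[ezu uU].
by apply/exists_inP; exists u.
Qed.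

Definition step (U : {set T}) := U :|: NS U.
Definition Vs j := iter j step Tt.
Definition D j := Vs j :\: Vs j.-1.

Lemma Vs_S j : Vs j.+1 = Vs j :|: NS (Vs j). Proof. by []. Qed.

Lemma Vs_le i j : i <= j -> Vs i \subset Vs j.
Proof.
move=> /subnK <-; elim: (j - i) => [|k IH]; first by rewrite add0n.
by apply: subset_trans IH _; rewrite addSn Vs_S subsetUl.
Qed.

Lemma NS_Vs j : NS (Vs j) \subset Vs j.+1.
Proof. by rewrite Vs_S subsetUr. Qed.

Lemma NS_mono (U U' : {set T}) : U \subset U' -> NS U \subset NS U'.
Proof.
move=> sU; apply/subsetP => v; rewrite !inE => /exists_inP[u uU evu].
by apply/exists_inP; exists u => //; apply: (subsetP sU).
Qed.

Lemma inv j : 0 < j -> forall v, v \in D j -> #|N v :\: M (Vs j.-1)| <= K.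
Proof.
elim: j => // j IH _ v; rewrite /D inE => /andP[vn vS].
case: j IH vn vS => [_|j IH] vn vS.
  apply: base; move: vS; rewrite Vs_S in_setU => /orP[h|//].
  by move: vn; rewrite /= h.
have : v \in NS (Vs j.+1) by move: vS; rewrite Vs_S in_setU (negbTE vn).
rewrite inNS => /exists_inP[u uS evu].
have un : u \notin Vs j.
  apply/negP => uj; move/negP: vn; apply; apply: (subsetP (NS_Vs j)).
  exact: NS_intro uj evu.
have uD : u \in D j.+1 by rewrite /D inE un uS.
have hu := IH erefl u uD.
have euv : e u v by rewrite esym.
have h := mostly_adj euv hu.
apply: leq_trans (_ : #|((N v :\ u) :\: NS (M (Vs j))) :|: [set u]| <= K).
  apply: subset_leq_card; apply/subsetP => b; rewrite !inE => /andP[bM vb].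
  rewrite vb andbT; case: (boolP (b == u)) => /= bu; rewrite ?orbT /= ?andbT ?orbF //.
  apply/negP => /exists_inP[q qM ebq]; move/negP: bM; apply.
  have := Fstep' ebq qM; rewrite inE /=; apply: leq_trans.
  apply: subset_leq_card; apply: setDS; exact: NS_Vs.
by apply: leq_trans (cardU_le _ _) _; rewrite cards1 addn1.
Qed.

Definition R j := M (Vs j.-1) :&: NS (D j).

Lemma countD j : 0 < j -> #|D j| * (mindeg e - K) <= K * #|R j|.
Proof.
move=> j0.
have := dcount e (D j) (R j).
have lo : \sum_(v in D j) (mindeg e - K) <= \sum_(v in D j) #|[set z in R j | e v z]|.
  apply: leq_sum => v vD.
  have h1 := inv j0 vD.
  have := dmin v; rewrite -(cardsID (M (Vs j.-1)) (N v)) => h2.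
  apply: leq_trans (_ : #|N v :&: M (Vs j.-1)| <= _); first by lia.
  apply: subset_leq_card; apply/subsetP => z; rewrite !inE => /andP[evz zM].
  rewrite zM evz andbT /=; apply/exists_inP; exists v => //; by rewrite esym.
have hi : \sum_(z in R j) #|[set v in D j | e v z]| <= \sum_(z in R j) K.
  apply: leq_sum => z; rewrite inE => /andP[zM _]; move: zM; rewrite inE; apply: leq_trans.
  apply: subset_leq_card; apply/subsetP => v; rewrite !inE => /andP[/andP[vn _] evz].
  by rewrite vn esym evz.
rewrite sum_nat_const in lo; rewrite sum_nat_const in hi.
move=> heq; rewrite [K * _]mulnC; apply: leq_trans lo _; rewrite heq; exact: hi.
Qed.

Lemma R_sub j : 1 < j -> R j \subset D j.-1 :|: D j.
Proof.
case: j => // j; case: j => // j _.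
apply/subsetP => z; rewrite in_setI => /andP[zM]; rewrite inNS => /exists_inP[v vD ezv].
have zS : z \in Vs j.+2.
  apply: (subsetP (NS_Vs j.+1)); apply: M_NS; exact: zM.
have zn : z \notin Vs j.
  apply/negP => zj; move: vD; rewrite /D inE => /andP[vn _]; move/negP: vn; apply.
  apply: (subsetP (NS_Vs j)); apply: (NS_intro zj); by rewrite esym.
rewrite /D in_setU !in_setD /= zn zS /=.
by case: (z \in Vs j.+1).
Qed.

Lemma recD j : 1 < j -> 4 * #|D j| <= #|D j.-1|.
Proof.
move=> j1; have h := countD (ltnW j1).
have h2 : #|R j| <= #|D j.-1| + #|D j|.
  by apply: leq_trans (cardU_le _ _); apply: subset_leq_card; apply: R_sub.
have hd6 : 6 * K <= mindeg e by have := K_ge; nia.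
have h3 : #|D j| * (mindeg e - K) <= K * (#|D j.-1| + #|D j|).
  by apply: leq_trans h _; rewrite leq_mul2l h2 orbT.
have h4 : #|D j| * (5 * K) <= #|D j| * (mindeg e - K).
  by rewrite leq_mul2l; apply/orP; right; lia.
rewrite -(leq_pmul2l Kpos).
have := leq_trans h4 h3; rewrite mulnDr; lia.
Qed.

Lemma cardVD j : #|Vs j.+1 :\: Tt| = #|Vs j :\: Tt| + #|D j.+1|.
Proof.
have s0 : Tt \subset Vs j by apply: (Vs_le (leq0n j)).
have s1 : Vs j \subset Vs j.+1 by apply: Vs_le.
have s2 : Tt \subset Vs j.+1 by apply: (Vs_le (leq0n _)).
rewrite /D /= !cardsDS //.
have h0 := subset_leq_card s0; have h1 : #|Vs j| <= #|step (Vs j)| := subset_leq_card s1; lia.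
Qed.

Lemma sumbound J : 0 < J -> 3 * #|Vs J :\: Tt| + #|D J| <= 4 * #|D 1|.
Proof.
elim: J => // J IH _; case: J IH => [_|J IH].
  by rewrite /D /=; lia.
rewrite cardVD; have := IH erefl; have := recD (j := J.+2) erefl; rewrite /=; lia.
Qed.

Lemma Tt_x0 : x0 \in Tt.
Proof.
have ey0x0 : e y0 x0 by rewrite esym.
have h := typ_big ey0x0 (big_nu ey0x0).
have h2 := dmin x0; rewrite (szN exy0) -(cardsID (typ y0 x0) (N x0 :\ y0)) in h2.
have : 0 < #|(N x0 :\ y0) :&: typ y0 x0| by have := K_ge; nia.
rewrite card_gt0 => /set0Pn[b]; rewrite in_setI => /andP[bN bT].
rewrite inE /cc card_gt0; apply/set0Pn; exists b.
rewrite in_setI in_setU /TB bT orbT andbT.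
by move: bN; rewrite !inE => /andP[].
Qed.

Lemma closed_all (U : {set T}) : (forall u v, connect e u v) -> x0 \in U ->
  NS U \subset U -> U = setT.
Proof.
move=> conn x0U sU; apply/setP => v; rewrite inE.
have cl : closed e (mem U).
  apply: intro_closed; first exact: sym_connect_sym.
  move=> a b eab aU; apply: (subsetP sU); apply: (NS_intro aU); by rewrite esym.
by rewrite -(closed_connect cl (conn x0 v)).
Qed.

Lemma cover : (forall u v, connect e u v) -> Vs #|T| = setT.
Proof.
move=> conn.
have g : forall J, Vs J = setT \/ J < #|Vs J|.
  elim => [|J [IH|IH]].
  - by right; rewrite card_gt0; apply/set0Pn; exists x0; apply: Tt_x0.
  - left; apply/setP => v; rewrite in_setT; apply: (subsetP (Vs_le (leqnSn J))); by rewrite IH.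
  - case: (boolP (NS (Vs J) \subset Vs J)) => hs.
      left; have hJ : Vs J = setT.
        by apply: closed_all conn _ hs; apply: (subsetP (Vs_le (leq0n J))); exact: Tt_x0.
      apply/setP => v; rewrite in_setT; apply: (subsetP (Vs_le (leqnSn J))); by rewrite hJ.
    right; apply: leq_ltn_trans IH _; apply: proper_card; rewrite Vs_S; apply/properP; split.
      by apply: subsetUl.
    have [v vN vn] : exists2 v, v \in NS (Vs J) & v \notin Vs J.
      by move: hs => /subsetPn[v ? ?]; exists v.
    by exists v => //; rewrite in_setU vN orbT.
case: (g #|T|) => // h; exfalso; move: h; rewrite ltnNge max_card.
done.
Qed.

Lemma y0_notX : y0 \notin X.
Proof. by rewrite (side_edge exy0) hx0. Qed.

Lemma Nx0_sub : N x0 \subset ~: X.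
Proof. by apply/subsetP => b; rewrite inN inE => /side_edge ->; rewrite hx0. Qed.

Lemma Ny0_sub : N y0 \subset X.
Proof. by apply/subsetP => b; rewrite inN => /side_edge ->; rewrite y0_notX. Qed.

Lemma TA_sub : TA \subset N y0.
Proof. apply: subset_trans (typ_sub x0 y0) _; exact: subD1set. Qed.

Lemma TB_sub : TB \subset N x0.
Proof. apply: subset_trans (typ_sub y0 x0) _; exact: subD1set. Qed.

Lemma TA_out a : a \in TA -> m * #|N a :\: N x0| <= m + #|N x0|.
Proof.
move=> aT.
have aN := subsetP TA_sub _ aT.
have aX : a \in X := subsetP Ny0_sub _ aN.
have hA := hmax aX.
have hna : m * #|(N x0 :\ y0) :\: N a| < #|N x0 :\ y0| by move: aT; rewrite /TA inE => /andP[_].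
have c1 := cardsID (N x0) (N a).
have c2 := cardsID (N a) (N x0 :\ y0).
have c3 : #|(N x0 :\ y0) :&: N a| <= #|N a :&: N x0|.
  by apply: subset_leq_card; apply/subsetP => b; rewrite !inE => /andP[/andP[_ ->] ->].
have c4 := szN exy0.
have c5 : #|N a :\: N x0| <= #|(N x0 :\ y0) :\: N a| + 1 by lia.
have c6 : m * #|N a :\: N x0| <= m * (#|(N x0 :\ y0) :\: N a| + 1) by apply: leq_mul.
lia.
Qed.

Definition YHB := (~: X) :&: H :\: N x0.

Lemma YHB_bound : #|YHB| * ((m - 2) * ss) <= #|N y0| * (m + #|N x0|) + #|YHB| * (m * (K + 2)).
Proof.
have dc := dcount e YHB TA.
have lo : \sum_(y in YHB) (m - 2) * ss <= \sum_(y in YHB) (m * #|[set a in TA | e y a]| + m * (K + 2)).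
  apply: leq_sum => y; rewrite /YHB !inE => /andP[yN /andP[yX yH]].
  apply: leq_trans yH _; rewrite -mulnDr leq_mul2l; apply/orP; right.
  rewrite -addnA leq_add2r; apply: subset_leq_card; apply/subsetP => b.
  rewrite in_setI inN /Typ in_setU => /andP[eyb /orP[bA|bB]].
    by rewrite inE bA eyb.
  exfalso; have := subsetP TB_sub _ bB; rewrite inN => /side_edge; rewrite hx0 /=.
  by rewrite (side_edge eyb) (negbTE yX).
have hi : \sum_(a in TA) m * #|[set y in YHB | e y a]| <= \sum_(a in TA) (m + #|N x0|).
  apply: leq_sum => a aT; apply: leq_trans (TA_out aT); rewrite leq_mul2l; apply/orP; right.
  apply: subset_leq_card; apply/subsetP => y; rewrite !inE => /andP[/andP[yN _] eya].
  by rewrite yN esym eya.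
have e1 : \sum_(y in YHB) m * #|[set a in TA | e y a]| = \sum_(a in TA) m * #|[set y in YHB | e y a]|.
  by rewrite -big_distrr /= dc big_distrr.
rewrite big_split /= e1 in lo.
rewrite !sum_nat_const in lo hi.
have hTA : #|TA| * (m + #|N x0|) <= #|N y0| * (m + #|N x0|).
  by apply: leq_mul => //; apply: subset_leq_card TA_sub.
lia.
Qed.

Lemma D1_bound : #|D 1| * (mindeg e - K) <= K * #|T|.
Proof. apply: leq_trans (countD (ltnSn 0)) _; apply: leq_mul => //; exact: max_card. Qed.

Lemma TH_bound : #|Tt :\: H| * (mindeg e - K) <= K * #|T|.
Proof.
have dc := dcount e (Tt :\: H) H.
have lo : \sum_(v in Tt :\: H) (mindeg e - K) <= \sum_(v in Tt :\: H) #|[set z in H | e v z]|.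
  apply: leq_sum => v; rewrite inE => /andP[_ vT].
  have h1 := F1 vT; have := dmin v; rewrite -(cardsID H (N v)) => h2.
  apply: leq_trans (_ : #|N v :&: H| <= _); first by lia.
  by apply: subset_leq_card; apply/subsetP => z; rewrite !inE => /andP[-> ->].
have hi : \sum_(z in H) #|[set v in Tt :\: H | e v z]| <= \sum_(z in H) K.
  apply: leq_sum => z zH; apply: leq_trans (F1 (subsetP H_sub_T _ zH)).
  apply: subset_leq_card; apply/subsetP => v; rewrite !inE => /andP[/andP[vH _] evz].
  by rewrite vH esym evz.
rewrite !sum_nat_const dc in lo hi.
have : #|H| * K <= #|T| * K by rewrite leq_mul2r max_card orbT.
rewrite mulnC [K * _]mulnC; lia.
Qed.

Lemma notT_bound : (forall u v, connect e u v) -> 3 * #|~: Tt| <= 4 * #|D 1|.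
Proof.
move=> conn.
have T0 : 0 < #|T| by apply/card_gt0P; exists x0.
have := sumbound T0; rewrite cover // setTD; lia.
Qed.

Lemma anchor_main : (forall u v, connect e u v) -> #|X| = #|~: X| ->
  m * mindeg e * (#|~: X| - #|N x0|) <=
    2 * #|~: X| * mindeg e + m * #|~: X| * (40 * m * (K + 2)).
Proof.
move=> conn hX.
have hT : #|T| = 2 * #|~: X| by rewrite -(cardsC X) hX; lia.
have hY : m * mindeg e * #|YHB| <= 2 * #|~: X| * mindeg e + 2 * m * #|~: X|.
  apply: (ar_s1 hm6 hd ss_ge _ _ _ YHB_bound).
  - by rewrite /ss; case: (leqP #|N y0| #|N x0|) => h; [left | right].
  - by rewrite -hX; apply: subset_leq_card Ny0_sub.
  - by apply: subset_leq_card Nx0_sub.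
have hZ2 := TH_bound; rewrite hT in hZ2.
have hD1 := D1_bound; rewrite hT in hD1.
have hZ1 := notT_bound conn.
apply: (ar_final hm6 Kpos hd hY hZ2 hD1 hZ1).
have s1 : (~: X) :\: N x0 \subset YHB :|: (~: Tt :|: (Tt :\: H)).
  apply/subsetP => y; rewrite !inE => /andP[yN yX]; rewrite yN yX /=.
  by case: (_ <= _); case: (0 < cc y).
have := subset_leq_card s1; rewrite cardsDS ?Nx0_sub // => h1.
have := cardU_le YHB (~: Tt :|: (Tt :\: H)); have := cardU_le (~: Tt) (Tt :\: H).
lia.
Qed.
End Anchor.

Lemma side_main : (forall u v, connect e u v) -> #|X| = #|~: X| -> 6 <= m ->
  120 * m * (K + 2) <= mindeg e -> 0 < #|X| ->
  maxdeg_in e X <= #|~: X| /\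
  m * mindeg e * (#|~: X| - maxdeg_in e X) <=
    2 * #|~: X| * mindeg e + m * #|~: X| * (40 * m * (K + 2)).
Proof.
move=> conn hX hm6 hd hX0.
have [x0 x0X hx0] := eq_bigmax_cond (fun v => deg e v) hX0.
have hmax x : x \in X -> #|N x| <= #|N x0|.
  move=> xX; have : deg e x <= deg e x0 by rewrite -hx0; apply: (leq_bigmax_cond (F := fun v => deg e v)).
  done.
have : 0 < #|N x0|.
  apply: leq_trans (mindeg_le x0); apply: leq_trans hd; rewrite !muln_gt0 addn2 /=.
  by apply/andP; split => //; apply: leq_trans hm6.
rewrite card_gt0 => /set0Pn[y0]; rewrite inN => exy0.
rewrite /maxdeg_in hx0; split.
  apply: subset_leq_card; apply/subsetP => b; rewrite inE => /side_edge; rewrite x0X inE => ->.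
  done.
exact: (anchor_main x0X exy0 hmax hm6 hd conn hX).
Qed.
End Graph.

Unset Implicit Arguments.
Local Open Scope ring_scope.

Lemma real_fin (R : realType) (n D d m C0 : nat) (eps : R) : (D <= n)%N ->
  (m * d * (n - D) <= 2 * n * d + m * n * C0)%N -> 3 * C0%:R <= d%:R :> R ->
  1 < eps * m%:R -> 0 < eps -> (0 < d)%N ->
  (1 - C0%:R / d%:R) * (1 - 10 * eps) * n%:R <= D%:R.
Proof.
move=> hDn hnat hC hme he hd0.
have hdR : 0 < d%:R :> R by rewrite ltr0n.
have hm0 : (0 < m)%N.
  case: m hme hnat => // ; rewrite mulr0 => h; exfalso; move: h; rewrite ltr10.
  done.
have hmR : 0 < m%:R :> R by rewrite ltr0n.
have key : ((m * d * (n - D))%:R <= (2 * n * d + m * n * C0)%:R :> R) by rewrite ler_nat.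
rewrite !natrM !natrD !natrM natrB // in key.
set nR := n%:R in key *; set DR := D%:R in key *; set dR := d%:R in key hC hdR *.
set mR := m%:R in key hme hmR *; set CR := C0%:R in key hC *.
have e1 : (1 - CR / dR) * (1 - 10 * eps) * nR = ((dR - CR) * (1 - 10 * eps) * nR) / dR.
  by field; apply/lt0r_neq0.
rewrite e1 ler_pdivrMr //.
have hC0 : 0 <= CR by rewrite /CR ler0n.
have hn0 : 0 <= nR by rewrite /nR ler0n.
have h2 : 2 * dR <= 10 * (eps * mR) * (dR - CR) by nra.
have h3 : nR * (2 * dR) <= nR * (10 * (eps * mR) * (dR - CR)) by apply: ler_wpM2l.
rewrite -(ler_pM2l hmR).
nra.
Qed.

Definition mm {R : realType} (eps : R) : nat := (Num.truncn (eps^-1) + 6)%N.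

Theorem mainTheorem14 (R : realType) :
  exists C : nat -> R -> R,
  forall (t : nat) (eps : R), (0 < t)%N -> 0 < eps < 1 ->
  forall (T : finType) (e : rel T) (X : {set T}),
    symmetric e -> irreflexive e ->
    (forall u v, e u v -> (u \in X) != (v \in X)) ->
    #|X| = #|~: X| ->
    (forall u v, connect e u v) ->
    3 * C t eps <= (mindeg e)%:R ->
    ~ has_induced_biclaw e t t ->
    (1 - C t eps / (mindeg e)%:R) * (1 - 10 * eps) * (#|X|)%:R
      <= (maxdeg_in e X)%:R /\
    (1 - C t eps / (mindeg e)%:R) * (1 - 10 * eps) * (#|X|)%:R
      <= (maxdeg_in e (~: X))%:R.
Proof.
exists (fun t eps => (40 * mm eps * (K t (mm eps) + 2))%:R).
move=> t eps ht /andP[eps0 eps1] T e X esym eirr ebip hbal conn hC nobc.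
set m := mm eps in hC *.
set C0 := (40 * m * (K t m + 2))%N in hC *.
have hm6 : (5 < m)%N by rewrite /m /mm addnC.
have hm0 : (0 < m)%N by apply: leq_trans hm6.
have hme : 1 < eps * m%:R.
  have h1 : eps^-1 < (Num.truncn (eps^-1)).+1%:R.
    by apply: real_truncnS_gt; apply: num_real.
  have h2 : (Num.truncn (eps^-1)).+1%:R <= m%:R :> R by rewrite ler_nat /m /mm addnC addSn ltnS leq_addl.
  have h3 := lt_le_trans h1 h2.
  by rewrite -(ltr_pM2l eps0) mulfV ?lt0r_neq0 // in h3.
have hC' : 3 * C0%:R <= (mindeg e)%:R :> R := hC.
have hd : (120 * m * (K t m + 2) <= mindeg e)%N.
  move: hC'; rewrite -[3]/(3%:R) -natrM ler_nat /C0; lia.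
have hd0 : (0 < mindeg e)%N.
  apply: leq_trans hd; rewrite !muln_gt0 hm0 addn2 /=; done.
case: (posnP #|X|) => hX0.
  by rewrite hX0 mulr0; split; apply: ler0n.
have [h1 h2] := side_main esym ebip ht hm0 nobc conn hbal hm6 hd hX0.
have ebip' : forall u v, e u v -> (u \in ~: X) != (v \in ~: X).
  by move=> u v /ebip; rewrite !inE; case: (u \in X); case: (v \in X).
have hbal' : #|~: X| = #|~: ~: X| by rewrite setCK.
have hX0' : (0 < #|~: X|)%N by rewrite -hbal.
have [h3 h4] := side_main esym ebip' ht hm0 nobc conn hbal' hm6 hd hX0'.
rewrite setCK in h3 h4.
rewrite -hbal in h1 h2.
split; [apply: (@real_fin R #|X| _ (mindeg e) m C0 eps) | apply: (@real_fin R #|X| _ (mindeg e) m C0 eps)] => //.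

Qed.
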